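(* For all integers $m\ge 2$ and $n\ge 1$, $p(m,n)<n!/2$.
   Context: For integers $m\ge 2$, $n\ge 1$, a valid $(m,n)$-sequence is a sequence $(a_1,\dots,a_{mn})$ with entries in $\{1,\dots,n\}$ in which each $k\in\{1,\dots,n\}$ occurs exactly $m$ times, and such that any two consecutive occurrences of $k$ are separated by exactly $k$ other terms; equivalently, there is an index $\theta_k$ such that $k$ occurs exactly at the positions $\theta_k,\ \theta_k+(k+1),\ \dots,\theta_k+(m-1)(k+1)$ (all in $\{1,\dots,mn\}$). The reversal of a valid sequence is again valid; $p(m,n)$ denotes the number of valid $(m,n)$-sequences counted up to reversal (i.e. the number of equivalence classes of valid sequences under identifying a sequence with its reversal). *)

(* Defs.v *)
From mathcomp Require Import all_boot.
Set Implicit Arguments. Unset Strict Implicit. Unset Printing Implicit Defensive.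

(* A candidate (m,n)-sequence: a tuple of length m*n with entries in 'I_n.+1
   (i.e. in {0,...,n}); validity additionally requires entries to be nonzero.
   Positions are 0-indexed: position i here is position i+1 in the paper. *)
Definition occurs_as_prescribed (m n : nat) (t : (m * n).-tuple 'I_n.+1)
    (k : 'I_n.+1) : bool :=
  [exists theta : 'I_(m * n),
     (theta + (m - 1) * (k + 1) < m * n) &&
     [forall i : 'I_(m * n),
        (tnth t i == k) == [exists j : 'I_m, val i == theta + j * (k + 1)]]].

Definition valid_seq (m n : nat) (t : (m * n).-tuple 'I_n.+1) : bool :=
  [forall i : 'I_(m * n), tnth t i != ord0] &&
  [forall k : 'I_n.+1, (k != ord0) ==> occurs_as_prescribed t k].

Definition rev_class (m n : nat) (s : (m * n).-tuple 'I_n.+1)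
    : {set (m * n).-tuple 'I_n.+1} :=
  [set t : (m * n).-tuple 'I_n.+1 | (t == s) || (val t == rev (val s))].

Definition p (m n : nat) : nat :=
  #|[set rev_class s | s in [pred s : (m * n).-tuple 'I_n.+1 | valid_seq s]]|.

(* Main.v *)
Require Import Defs.
From mathcomp Require Import all_boot.
From Stdlib Require Import Lia.
Set Implicit Arguments. Unset Strict Implicit. Unset Printing Implicit Defensive.

Ltac mlia := intros; repeat match goal with
 | H : is_true (_ <= _) |- _ => move/leP: H => H
 | H : is_true (_ == _) |- _ => move/eqP: H => H
 end; try apply/leP; try (match goal with |- is_true (_ == _) => apply/eqP end); unfold addn, subn, muln, addn_rec, subn_rec, muln_rec in *; lia.

Lemma validP (m n : nat) (s : (m*n).-tuple 'I_n.+1) : valid_seq s ->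
  (forall i, i < m*n -> nth ord0 s i != ord0) /\
  (forall k : 'I_n.+1, k != ord0 -> index k s + (m-1)*(k+1) < m*n /\
     forall i, i < m*n -> (nth ord0 s i == k) = [exists j : 'I_m, i == index k s + j*(k+1)]).
Proof.
move=> /andP [/forallP H0 /forallP Hk]; split.
  by move=> i hi; have := H0 (Ordinal hi); rewrite (tnth_nth ord0).
move=> k k0; have /existsP [th /andP [Hlt /forallP Hall]] := implyP (Hk k) k0.
have : 0 < m * n by apply: leq_ltn_trans (ltn_ord th).
rewrite muln_gt0 => /andP [hm0 hn0].
have Hth : nth ord0 s th = k.
  have := Hall th; rewrite (tnth_nth ord0) => /eqP E; apply/eqP; rewrite E.
  by apply/existsP; exists (Ordinal hm0); rewrite /= mul0n addn0.
have Hidx : index k s = th.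
  apply/eqP; rewrite eqn_leq; apply/andP; split.
    rewrite -(cat_take_drop th s) (drop_nth ord0) ?size_tuple // Hth index_cat /= eqxx addn0.
    have hs : size (take th s) <= th by rewrite size_take size_tuple ltn_ord.
    by case: ifP => _ //; apply: leq_trans (index_size k (take th s)) hs.
  rewrite leqNgt; apply/negP => hlt.
  have hi : index k s < m * n by apply: ltn_trans hlt (ltn_ord th).
  have kin : k \in val s by rewrite -index_mem size_tuple.
  have := Hall (Ordinal hi); rewrite (tnth_nth ord0) /= nth_index // eqxx eq_sym.
  move/eqP/existsP => [j /eqP hj]; move: hlt; rewrite hj.
  by rewrite ltnNge leq_addr.
split; first by rewrite Hidx.
by move=> i hi; have := Hall (Ordinal hi); rewrite (tnth_nth ord0) Hidx /= => /eqP.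
Qed.

Lemma rev_valid m n (s : (m*n).-tuple 'I_n.+1) : valid_seq s -> valid_seq (rev_tuple s).
Proof.
move=> Hv; have [H0 Hk] := validP Hv.
apply/andP; split.
  apply/forallP => i; rewrite (tnth_nth ord0) /= nth_rev size_tuple //; apply: H0.
  have := ltn_ord i; mlia.
apply/forallP => k; apply/implyP => k0; have [Hlt Hc] := Hk k k0.
move: Hlt Hc; set th := index k s; set X := (m-1)*(k+1) => Hlt Hc.
have hth' : m*n - (th + X).+1 < m*n by mlia.
apply/existsP; exists (Ordinal hth'); apply/andP; split; first by rewrite /=; mlia.
apply/forallP => i; rewrite (tnth_nth ord0) /= nth_rev size_tuple ?ltn_ord //.
have hi := ltn_ord i.
rewrite Hc; last by mlia.
have : 0 < m*n by apply: leq_ltn_trans hi.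
rewrite muln_gt0 => /andP [hm _].
apply/eqP; apply/existsP/existsP => [[j /eqP hj]|[j /eqP hj]].
  have hj' : m - 1 - j < m by mlia.
  exists (Ordinal hj'); rewrite /= mulnBl -/X.
  have : j * (k+1) <= X by rewrite /X leq_mul2r; apply/orP; right; have := ltn_ord j; mlia.
  move: hj; set Y := j * (k+1) => hj hY; mlia.
have hj' : m - 1 - j < m by mlia.
exists (Ordinal hj'); rewrite /= mulnBl -/X.
have : j * (k+1) <= X by rewrite /X leq_mul2r; apply/orP; right; have := ltn_ord j; mlia.
move: hj; set Y := j * (k+1) => hj hY; mlia.
Qed.

Lemma occ m n (s : (m*n).-tuple 'I_n.+1) (Hv : valid_seq s) (k : 'I_n.+1) (k0 : k != ord0) i j :
  j < m -> i = index k s + j*(k+1) -> nth ord0 s i = k.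
Proof.
have [_ Hk] := validP Hv; have [Hlt Hc] := Hk k k0.
move=> hj ->; apply/eqP; rewrite Hc; first by apply/existsP; exists (Ordinal hj).
have : j * (k+1) <= (m-1)*(k+1) by rewrite leq_mul2r; apply/orP; right; mlia.
move: Hlt; set X := (m-1)*(k+1); set Y := j*(k+1); mlia.
Qed.

Lemma occ_inv m n (s : (m*n).-tuple 'I_n.+1) (Hv : valid_seq s) (k : 'I_n.+1) (k0 : k != ord0) i :
  i < m * n -> nth ord0 s i = k -> exists j, j < m /\ i = index k s + j*(k+1).
Proof.
have [_ Hk] := validP Hv; have [Hlt Hc] := Hk k k0.
move=> hi /eqP; rewrite Hc // => /existsP [j /eqP ->]; by exists j.
Qed.

Lemma occ_bound m n (s : (m*n).-tuple 'I_n.+1) (Hv : valid_seq s) (k : 'I_n.+1) (k0 : k != ord0) :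
  index k s + (m-1)*(k+1) < m*n.
Proof. by have [_ Hk] := validP Hv; have [Hlt Hc] := Hk k k0. Qed.

Lemma j_bound m (k j : nat) : j < m -> j * (k+1) <= (m-1)*(k+1).
Proof. by move=> hj; rewrite leq_mul2r; apply/orP; right; mlia. Qed.

Lemma pal_eq m n (s : (m*n).-tuple 'I_n.+1) (Hv : valid_seq s) (Hr : rev s = s)
  (k : 'I_n.+1) (k0 : k != ord0) :
  index k s + index k s + (m-1)*(k+1) = m*n - 1.
Proof.
have Hlt := occ_bound Hv k0.
have E : forall i, i < m*n -> nth ord0 s (m*n - i.+1) = nth ord0 s i.
  by move=> i hi; have := nth_rev ord0 (_ : i < size s); rewrite Hr size_tuple => ->.
have : 0 < m*n := leq_ltn_trans (leq0n _) Hlt.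
rewrite muln_gt0 => /andP [hm _].
move: Hlt; set th := index k s; set X := (m-1)*(k+1) => Hlt.
have a : nth ord0 s (m*n - th.+1) = k.
  rewrite E; last by mlia.
  by apply: (occ Hv k0 (j := 0)) => //; rewrite mul0n addn0.
have b : nth ord0 s (m*n - (th+X).+1) = k.
  rewrite E; last by mlia.
  by apply: (occ Hv k0 (j := m-1)); first mlia.
have b1 : m*n - th.+1 < m*n by mlia.
have b2 : m*n - (th+X).+1 < m*n by mlia.
have [j [hj Ej]] := occ_inv Hv k0 b1 a.
have [j' [hj' Ej']] := occ_inv Hv k0 b2 b.
have := j_bound k hj; rewrite -/X -/th in Ej Ej' *.
move: Ej Ej'; set Y := j * (k+1); set Y' := j' * (k+1).
clearbody Y Y' X th; mlia.
Qed.

Lemma no_pal m n (s : (m*n).-tuple 'I_n.+1) : 1 < n -> valid_seq s -> rev s != s.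
Proof.
move=> hn Hv; apply/negP => /eqP Hr.
have i1 : 1 < n.+1 by mlia.
have i2 : 2 < n.+1 by mlia.
pose k1 : 'I_n.+1 := inord 1; pose k2 : 'I_n.+1 := inord 2.
have v1 : (k1 : nat) = 1 by rewrite /k1 inordK.
have v2 : (k2 : nat) = 2 by rewrite /k2 inordK.
have k10 : k1 != ord0 by rewrite -val_eqE /= v1.
have k20 : k2 != ord0 by rewrite -val_eqE /= v2.
have e1 := pal_eq Hv Hr k10; have e2 := pal_eq Hv Hr k20.
have hb := occ_bound Hv k10.
rewrite v1 in e1 hb; rewrite v2 in e2.
have hm : 0 < m by mlia.
have hh : index k1 s - index k2 s < m by mlia.
have P1 := occ Hv k10 (i := index k1 s + (index k1 s - index k2 s) * 2) hh.
have P2 := occ Hv k20 (i := index k1 s + (index k1 s - index k2 s) * 2) hh.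
rewrite v1 in P1; rewrite v2 in P2.
have : k1 = k2.
  rewrite -P1 //; apply: P2.
  move: e1 e2 hb; clearbody k1 k2; set t1 := index k1 s; set t2 := index k2 s; clearbody t1 t2.
  mlia.
by move/(congr1 val); rewrite /= v1 v2.
Qed.


Lemma take_index_eq (T : eqType) (s t : seq T) i k :
  i <= size s -> i <= size t -> take i s = take i t -> index k s < i -> index k t = index k s.
Proof.
move=> his hit E hk.
have ks : k \in s by rewrite -index_mem; apply: leq_trans hk his.
have kts : k \in take i s by rewrite in_take.
have ktt : k \in take i t by rewrite -E.
by rewrite -(cat_take_drop i s) -(cat_take_drop i t) !index_cat kts ktt E.
Qed.

Lemma same_pos m n (s t : (m*n).-tuple 'I_n.+1) (Vs : valid_seq s) (Vt : valid_seq t) i :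
  i < m * n -> take i s = take i t -> nth ord0 s i \in take i s -> nth ord0 t i = nth ord0 s i.
Proof.
move=> hi E ks.
have [Hs0 _] := validP Vs.
have k0 := Hs0 i hi.
move: ks; set k := nth ord0 s i => ks.
have ks' : k \in val s by apply: mem_nth; rewrite size_tuple.
rewrite in_take // in ks.
have it := take_index_eq (ltnW (_ : i < size s)) (ltnW (_ : i < size t)) E ks.
have [j [hj Ej]] := occ_inv Vs k0 hi erefl.
apply: (occ Vt k0 hj).
rewrite it ?size_tuple //.
Qed.

Lemma last_eq (T : eqType) (A B U : seq T) (k l : T) : A ++ k :: U = B ++ l :: U -> k = l.
Proof.
move=> EF; have := congr1 size EF; rewrite !size_cat /= => hs.
have hs' : size A = size B by mlia.
by move/eqP: EF; rewrite eqseq_cat // => /andP [_ /eqP [->]].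
Qed.


Lemma inj_F m n (s t : (m*n).-tuple 'I_n.+1) : valid_seq s -> valid_seq t ->
  undup (rev s) = undup (rev t) -> s = t.
Proof.
move=> Vs Vt EF.
suff H : forall i, i <= m*n -> take i s = take i t.
  by apply: val_inj; rewrite /= -(take_size s) -(take_size t) !size_tuple H.
elim=> [|i IH] hi; first by rewrite !take0.
have hi' : i < m*n := hi.
have E := IH (ltnW hi).
rewrite !(take_nth ord0) ?size_tuple // E; congr rcons.
case: (boolP (nth ord0 s i \in take i s)) => ks.
  by rewrite (same_pos Vs Vt hi' E ks).
case: (boolP (nth ord0 t i \in take i t)) => kt.
  by rewrite (same_pos Vt Vs hi' (esym E) kt).
have Ds : undup (rev s) = [seq x <- undup (rev (drop i.+1 s)) | x \notin nth ord0 s i :: rev (take i s)]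
    ++ nth ord0 s i :: undup (rev (take i s)).
  rewrite -{1}(cat_take_drop i s) (drop_nth ord0) ?size_tuple // rev_cat rev_cons cat_rcons.
  by rewrite undup_cat /= mem_rev (negbTE ks).
have Dt : undup (rev t) = [seq x <- undup (rev (drop i.+1 t)) | x \notin nth ord0 t i :: rev (take i t)]
    ++ nth ord0 t i :: undup (rev (take i t)).
  rewrite -{1}(cat_take_drop i t) (drop_nth ord0) ?size_tuple // rev_cat rev_cons cat_rcons.
  by rewrite undup_cat /= mem_rev (negbTE kt).
rewrite Ds Dt -E in EF.
exact: last_eq EF.
Qed.

Lemma rev_class_rev m n (s : (m*n).-tuple 'I_n.+1) : rev_class (rev_tuple s) = rev_class s.
Proof.
apply/setP => t; rewrite !inE /= revK -!val_eqE /= orbC //.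
Qed.

Lemma part1 m n (hn : 1 < n) :
  2 * p m n <= #|[pred s : (m*n).-tuple 'I_n.+1 | valid_seq s]|.
Proof.
rewrite /p -[X in _ <= X]sum1_card (partition_big_imset (@rev_class m n)) /=.
rewrite mulnC -sum_nat_const; apply: leq_sum => c /imsetP [s0 Hs0 ->].
have V0 : valid_seq s0 by move: Hs0; rewrite inE.
rewrite (bigD1 s0) /=; last by rewrite Hs0 eqxx.
rewrite (bigD1 (rev_tuple s0)) /=; first by rewrite addnA.
rewrite !inE rev_valid // rev_class_rev eqxx /= -val_eqE /=.
exact: no_pal hn V0.
Qed.

Lemma ord_pos n (a : 'I_n.+1) : a != ord0 -> 0 < a.
Proof. by rewrite lt0n; apply: contra => /eqP h; apply/eqP; apply: val_inj. Qed.

Lemma F_shape m n (s : (m*n).-tuple 'I_n.+1) (Vs : valid_seq s) (hm : 1 < m) (hn : 1 < n) :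
  exists a b r, tval s = a :: b :: r /\ a != b /\
     undup (rev s) = [seq x <- undup (rev r) | x \notin [:: b; a]] ++ [:: b; a].
Proof.
have [Hs0 _] := validP Vs.
have h4 : 4 <= m * n := leq_mul hm hn.
have hsz : 2 <= size s by rewrite size_tuple; apply: leq_trans h4.
case Es : (tval s) hsz => [|a [|b r]] hsz'; try by [].
exists a, b, r; split => //.
have a0 : a != ord0 by move: (Hs0 0 (leq_trans (isT : 0 < 4) h4)); rewrite Es.
have ab : a != b.
  apply/negP => /eqP ab.
  have h1 : 1 < m * n by move: (size_tuple s); rewrite Es /= => <-.
  have := occ_inv Vs a0 h1; rewrite Es /= eqxx -ab => /(_ erefl) [j [_ hj]].
  have := ord_pos a0; case: j hj => [|j]; rewrite ?mul0n ?mulSn => hj; mlia.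
split => //.
rewrite -[a :: b :: r]/([:: a; b] ++ r) rev_cat undup_cat.
congr cat; rewrite [rev _]/= /= inE eq_sym (negbTE ab) //.
Qed.

Definition one n : 'I_n.+1 := inord 1.
Definition two n : 'I_n.+1 := inord 2.
Definition l0 n := enum (predC1 (ord0 : 'I_n.+1)).
Definition x0 n := [seq x <- l0 n | x \notin [:: one n; two n]] ++ [:: one n; two n].

Lemma one_val n : 1 < n -> (one n : nat) = 1.
Proof. by move=> hn; rewrite /one inordK //; mlia. Qed.
Lemma two_val n : 1 < n -> (two n : nat) = 2.
Proof. by move=> hn; rewrite /two inordK //; mlia. Qed.
Lemma one_ne0 n : 1 < n -> one n != ord0.
Proof. by move=> hn; rewrite -val_eqE /= one_val. Qed.
Lemma two_ne0 n : 1 < n -> two n != ord0.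
Proof. by move=> hn; rewrite -val_eqE /= two_val. Qed.
Lemma one_ne_two n : 1 < n -> one n != two n.
Proof. by move=> hn; rewrite -val_eqE /= one_val ?two_val. Qed.

Lemma F_ne m n (s : (m*n).-tuple 'I_n.+1) (Vs : valid_seq s) (hm : 1 < m) (hn : 1 < n) :
  undup (rev s) != x0 n.
Proof.
have [a [b [r [Es [ab EF]]]]] := F_shape Vs hm hn.
rewrite EF; apply/negP => /eqP E.
have hs := congr1 size E; rewrite !size_cat /= in hs.
move/eqP: E; rewrite /x0 eqseq_cat; last exact: addIn hs.
move=> /andP [_ /eqP [hb ha]].
have h4 : 4 <= m * n := leq_mul hm hn.
have i2 : index (two n) s = 0 by rewrite Es ha /= eqxx.
have i1 : index (one n) s = 1 by rewrite Es /=; move: ab; rewrite ha hb => /negbTE; rewrite eq_sym => ->; rewrite /= eqxx.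
have P2 : nth ord0 s 3 = two n by apply: (occ Vs (two_ne0 hn) (j := 1)) => //; rewrite i2 two_val.
have P1 : nth ord0 s 3 = one n by apply: (occ Vs (one_ne0 hn) (j := 1)) => //; rewrite i1 one_val.
by move: (one_ne_two hn); rewrite -P1 -P2 eqxx.
Qed.

Lemma x0_mem n : 1 < n -> x0 n \in permutations (l0 n).
Proof.
move=> hn; rewrite mem_permutations; apply: uniq_perm.
- rewrite /x0 cat_uniq filter_uniq ?enum_uniq //= !mem_filter !inE !eqxx /= andbT.
  rewrite !orbT /=.
exact: one_ne_two.
- by rewrite /l0 enum_uniq.
- move=> x; rewrite /x0 mem_cat mem_filter /l0 !mem_enum !inE.
  case: eqP => [->|_]; first by rewrite one_ne0.
  case: eqP => [->|_]; first by rewrite two_ne0.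
  by rewrite /= orbF.
Qed.

Lemma part2 m n (hm : 1 < m) (hn : 0 < n) :
  #|[pred s : (m*n).-tuple 'I_n.+1 | valid_seq s]| < n`!.
Proof.
case: (ltnP 1 n) => hn2; last first.
  have n1 : n = 1 by mlia.
  subst n; rewrite eq_card0 // => s; rewrite !inE; apply/negP => Vs.
  have k0 : (ord_max : 'I_2) != ord0 by [].
  have := occ_bound Vs k0; rewrite /=; mlia.
set V := [pred s : (m*n).-tuple 'I_n.+1 | valid_seq s].
pose L := map (fun s : (m*n).-tuple 'I_n.+1 => undup (rev s)) (enum V).
have uL : uniq L.
  rewrite map_inj_in_uniq ?enum_uniq // => x y; rewrite !mem_enum !inE => hx hy.
  exact: inj_F.
have sL : size L = #|V| by rewrite size_map -cardE.
have sub : {subset L <= [seq y <- permutations (l0 n) | y != x0 n]}.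
  move=> y /mapP [s]; rewrite mem_enum inE => Vs ->.
  rewrite mem_filter F_ne // mem_permutations.
  apply: uniq_perm; [exact: undup_uniq | by rewrite /l0 enum_uniq | ] => x.
  rewrite mem_undup mem_rev /l0 mem_enum inE.
  apply/idP/idP => [/(nthP ord0) [i hi <-] | xn0].
    by apply: (validP Vs).1; rewrite size_tuple in hi.
  rewrite -index_mem size_tuple.
  exact: leq_ltn_trans (leq_addr _ _) (occ_bound Vs xn0).
have := uniq_leq_size uL sub; rewrite sL size_filter.
have c1 : count (pred1 (x0 n)) (permutations (l0 n)) = 1.
  by rewrite count_uniq_mem ?permutations_uniq // x0_mem.
have c2 := count_predC (pred1 (x0 n)) (permutations (l0 n)).
have e : count (fun y => y != x0 n) (permutations (l0 n)) = count (predC (pred1 (x0 n))) (permutations (l0 n)).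
  by apply: eq_count.
rewrite size_permutations /l0 ?enum_uniq // -cardE cardC1 card_ord /= in c2.
have := fact_gt0 n.
rewrite e; move: c1 c2; rewrite /l0.
set A := count _ _; set B := count _ _. mlia.
Qed.

Theorem proposition3 (m n : nat) (hm : 2 <= m) (hn : 1 <= n) :
  2 * p m n < n`!.
Proof.
case: (ltnP 1 n) => hn2.
  exact: leq_ltn_trans (part1 m hn2) (part2 hm hn).
have n1 : n = 1 by mlia.
have h := part2 hm hn.
have hp : p m n <= #|[pred s : (m*n).-tuple 'I_n.+1 | valid_seq s]| by apply: leq_imset_card.
move: h hp; set V := #|_|; subst n; rewrite (_ : 1`! = 1) //; mlia.
Qed.
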